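(* Assume (H1)–(H4) and let $H$ be a defining function for $Y$. Let $u$ be an upper semicontinuous viscosity subsolution of $( * )$ on $X$, and suppose $\phi\in C^2$ is such that $u-\phi$ has a strict local maximum at $x\in X$. Then $$\max\{-g(\nabla\phi(x))\det(D^2\phi(x))+f(x),\;-\lambda_1(D^2\phi(x)),\;H(\nabla\phi(x))\}\le 0.$$
   Context: Standing hypotheses (H1)–(H4): (H1) $X,Y\subset\mathbb{R}^n$ are convex, bounded, open domains. (H2) $f\in L^1(X)$ is non-negative and lower semicontinuous. (H3) $g\in L^1(\mathbb{R}^n)$ is positive on $Y$, vanishes on $\mathbb{R}^n\setminus Y$, and is upper semicontinuous. (H4) $\int_X f\,dx=\int_Y g\,dy$. A defining function for $Y$ is a continuous $H:\mathbb{R}^n\to\mathbb{R}$ with $H<0$ on $Y$, $H=0$ on $\partial Y$, $H>0$ on $\mathbb{R}^n\setminus\bar Y$. $\lambda_1(A)$ is the smallest eigenvalue of a symmetric matrix $A$. Equation $( * )$: $\max\{-g(\nabla u)\det(D^2u)+f,-\lambda_1(D^2u),H(\nabla u)\}=0$ in $X$. With $F(x,p,A)=\max\{-g(p)\det A+f(x),-\lambda_1(A),H(p)\}$, an upper semicontinuous $u$ is a viscosity subsolution of $( * )$ if for every $\phi\in C^2$ and $x\in X$ at which $u-\phi$ has a local maximum, $F_*(x,\nabla\phi(x),D^2\phi(x))\le0$, $F_*$ the lower semicontinuous envelope of $F$. *)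

(* Defs.v *)
From HB Require Import structures.
From Stdlib Require Import Reals Lra ClassicalEpsilon FunctionalExtensionality.
From mathcomp Require Import all_boot all_algebra.

Set Implicit Arguments.
Unset Strict Implicit.
Unset Printing Implicit Defensive.

Local Open Scope R_scope.

Definition R_eqb (x y : R) : bool := if Req_EM_T x y then true else false.
Lemma R_eqP : Equality.axiom R_eqb.
Proof. move=> x y; rewrite /R_eqb; case: Req_EM_T => h; by constructor. Qed.
HB.instance Definition _ := hasDecEq.Build R R_eqP.

Definition R_find (P : pred R) (_ : nat) : option R :=
  match excluded_middle_informative (exists x, P x) with
  | left h => Some (proj1_sig (constructive_indefinite_description _ h))
  | right _ => None
  end.
Lemma R_find_correct P n x : R_find P n = Some x -> P x.
Proof.
rewrite /R_find; case: excluded_middle_informative => // h [<-].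
exact: proj2_sig (constructive_indefinite_description _ h).
Qed.
Lemma R_find_complete (P : pred R) : (exists x, P x) -> exists n, R_find P n.
Proof. move=> h; exists 0%N; rewrite /R_find; by case: excluded_middle_informative. Qed.
Lemma R_find_ext (P Q : pred R) : P =1 Q -> R_find P =1 R_find Q.
Proof. by move=> /functional_extensionality ->. Qed.
HB.instance Definition _ :=
  hasChoice.Build R R_find_correct R_find_complete R_find_ext.

Lemma R_addA : associative Rplus. Proof. move=> *; ring. Qed.
Lemma R_addC : commutative Rplus. Proof. move=> *; ring. Qed.
Lemma R_add0 : left_id 0 Rplus. Proof. move=> *; ring. Qed.
Lemma R_addN : left_inverse 0 Ropp Rplus. Proof. move=> *; ring. Qed.
HB.instance Definition _ := GRing.isZmodule.Build R R_addA R_addC R_add0 R_addN.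

Lemma R_mulA : associative Rmult. Proof. move=> *; ring. Qed.
Lemma R_mulC : commutative Rmult. Proof. move=> *; ring. Qed.
Lemma R_mul1 : left_id 1 Rmult. Proof. move=> *; ring. Qed.
Lemma R_mulDl : left_distributive Rmult Rplus. Proof. move=> *; ring. Qed.
Lemma R_one_neq0 : (1 != 0 :> R)%B.
Proof. apply/eqP; exact: R1_neq_R0. Qed.
HB.instance Definition _ :=
  GRing.Zmodule_isComNzRing.Build R R_mulA R_mulC R_mul1 R_mulDl R_one_neq0.


Notation vec n := 'rV[R]_n.

Definition vnorm {n : nat} (v : vec n) : R :=
  sqrt (\sum_(i < n) (v ord0 i * v ord0 i))%R.
Definition dist {n : nat} (x y : vec n) : R := vnorm (x - y)%R.

(* Frobenius norm on n x n matrices (all norms are equivalent). *)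
Definition mnorm {n : nat} (A : 'M[R]_n) : R :=
  sqrt (\sum_(i < n) \sum_(j < n) (A i j * A i j))%R.

Definition dotp {n : nat} (p v : vec n) : R := (\sum_(i < n) (p ord0 i * v ord0 i))%R.

Definition symmetric {n : nat} (A : 'M[R]_n) : Prop := (A^T)%R = A.

Definition is_open {n : nat} (S : vec n -> Prop) : Prop :=
  forall x, S x -> exists r, 0 < r /\ forall y, dist y x < r -> S y.

Definition is_convex {n : nat} (S : vec n -> Prop) : Prop :=
  forall x y t, S x -> S y -> 0 <= t <= 1 -> S (x + t *: (y - x))%R.

Definition is_bounded {n : nat} (S : vec n -> Prop) : Prop :=
  exists M, forall x, S x -> vnorm x <= M.

(* (H1): convex, bounded, open domain (a domain is nonempty, open, connected;
   connectedness follows from convexity). *)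
Definition convex_bounded_domain {n : nat} (S : vec n -> Prop) : Prop :=
  (exists x, S x) /\ is_open S /\ is_convex S /\ is_bounded S.

Definition closure {n : nat} (S : vec n -> Prop) (x : vec n) : Prop :=
  forall r, 0 < r -> exists y, S y /\ dist y x < r.

Definition boundary {n : nat} (S : vec n -> Prop) (x : vec n) : Prop :=
  closure S x /\ closure (fun y => ~ S y) x.

Definition lsc_on {n : nat} (S : vec n -> Prop) (h : vec n -> R) : Prop :=
  forall x, S x -> forall eps, 0 < eps ->
    exists delta, 0 < delta /\ forall y, S y -> dist y x < delta -> h x - eps < h y.

Definition usc_on {n : nat} (S : vec n -> Prop) (h : vec n -> R) : Prop :=
  forall x, S x -> forall eps, 0 < eps ->
    exists delta, 0 < delta /\ forall y, S y -> dist y x < delta -> h y < h x + eps.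

Definition continuous_on {n : nat} (S : vec n -> Prop) (h : vec n -> R) : Prop :=
  forall x, S x -> forall eps, 0 < eps ->
    exists delta, 0 < delta /\ forall y, S y -> dist y x < delta -> Rabs (h y - h x) < eps.

Definition whole {n : nat} : vec n -> Prop := fun _ => True.

Definition box_vol {n : nat} (a b : vec n) : R := (\prod_(i < n) (b ord0 i - a ord0 i))%R.

Definition box_cover_le {n : nat} (E : vec n -> Prop) (c : R) : Prop :=
  exists a b : nat -> vec n,
    (forall k i, a k ord0 i <= b k ord0 i) /\
    (forall x, E x -> exists k, forall i, a k ord0 i <= x ord0 i <= b k ord0 i) /\
    (forall N, sum_f_R0 (fun k => box_vol (a k) (b k)) N <= c).

(* Lebesgue outer measure (the greatest lower bound of the covering volumes);
   it is a finite real number for the bounded sets used below. *)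
Definition outer_measure {n : nat} (E : vec n -> Prop) : R :=
  epsilon (inhabits 0) (fun m =>
    (forall c, box_cover_le E c -> m <= c) /\
    (forall m', (forall c, box_cover_le E c -> m' <= c) -> m' <= m)).

Definition distrib {n : nat} (E : vec n -> Prop) (h : vec n -> R) (t : R) : R :=
  outer_measure (fun x => E x /\ t < h x).

(* Riemann sums of the nonincreasing distribution function on [0, N]
   with mesh 1/N (N := k+1). *)
Definition layer_sum {n : nat} (E : vec n -> Prop) (h : vec n -> R) (k : nat) : R :=
  sum_f_R0 (fun j => distrib E h (INR (S j) / INR (S k)) / INR (S k))
           (Nat.pred (S k * S k)).

(* integral over E of the nonnegative function h equals I
   (layer cake: \int_E h = \int_0^oo |{h > t}| dt). *)
Definition has_integral {n : nat} (E : vec n -> Prop) (h : vec n -> R) (I : R) : Prop :=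
  Un_cv (layer_sum E h) I.

(* h is a nonnegative function in L^1(E) (h is semicontinuous below, hence
   Borel measurable, so L^1 amounts to finiteness of the integral). *)
Definition L1_nonneg {n : nat} (E : vec n -> Prop) (h : vec n -> R) : Prop :=
  (forall x, E x -> 0 <= h x) /\ exists I, has_integral E h I.

Definition eigenvalue {n : nat} (A : 'M[R]_n) (l : R) : Prop :=
  exists v : 'cV[R]_n, (v != 0)%R /\ (A *m v = l *: v)%R.

Definition lambda1 {n : nat} (A : 'M[R]_n) : R :=
  epsilon (inhabits 0) (fun l => eigenvalue A l /\ forall mu, eigenvalue A mu -> l <= mu).

Definition is_C2 {n : nat} (phi : vec n -> R) (Dphi : vec n -> vec n)
    (D2phi : vec n -> 'M[R]_n) : Prop :=
  (forall x eps, 0 < eps -> exists delta, 0 < delta /\ forall y, dist y x < delta ->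
      Rabs (phi y - phi x - dotp (Dphi x) (y - x)%R) <= eps * dist y x) /\
  (forall x eps, 0 < eps -> exists delta, 0 < delta /\ forall y, dist y x < delta ->
      vnorm (Dphi y - Dphi x - (y - x) *m D2phi x)%R <= eps * dist y x) /\
  (forall x eps, 0 < eps -> exists delta, 0 < delta /\ forall y, dist y x < delta ->
      mnorm (D2phi y - D2phi x)%R < eps).

Definition defining_function {n : nat} (Y : vec n -> Prop) (H : vec n -> R) : Prop :=
  continuous_on whole H /\
  (forall p, Y p -> H p < 0) /\
  (forall p, boundary Y p -> H p = 0) /\
  (forall p, ~ closure Y p -> 0 < H p).

Definition Fop {n : nat} (f g H : vec n -> R) (x p : vec n) (A : 'M[R]_n) : R :=
  Rmax (Rmax (- g p * (\det A)%R + f x) (- lambda1 A)) (H p).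

(* F_*(x,p,A) <= c, where F_* is the lower semicontinuous envelope of F on
   X x R^n x Sym(n):  liminf_{(y,q,B) -> (x,p,A)} F(y,q,B) <= c. *)
Definition lsc_envelope_le {n : nat} (X : vec n -> Prop)
    (F : vec n -> vec n -> 'M[R]_n -> R) (x p : vec n) (A : 'M[R]_n) (c : R) : Prop :=
  forall delta eps, 0 < delta -> 0 < eps ->
    exists y q B, X y /\ symmetric B /\ dist y x < delta /\ dist q p < delta /\
      mnorm (B - A)%R < delta /\ F y q B < c + eps.

Definition local_max_at {n : nat} (X : vec n -> Prop) (w : vec n -> R) (x : vec n) : Prop :=
  exists r, 0 < r /\ forall y, X y -> dist y x < r -> w y <= w x.

Definition strict_local_max_at {n : nat} (X : vec n -> Prop) (w : vec n -> R) (x : vec n) : Prop :=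
  exists r, 0 < r /\ forall y, X y -> dist y x < r -> y <> x -> w y < w x.

Definition viscosity_subsolution {n : nat} (X : vec n -> Prop) (f g H : vec n -> R)
    (u : vec n -> R) : Prop :=
  usc_on X u /\
  forall phi Dphi D2phi, is_C2 phi Dphi D2phi ->
    forall x, X x -> local_max_at X (fun y => u y - phi y) x ->
      lsc_envelope_le X (Fop f g H) x (Dphi x) (D2phi x) 0.

(* Main.v *)
Require Import Defs.
From HB Require Import structures.
From Stdlib Require Import Reals Lra Psatz Classical ClassicalEpsilon.
From mathcomp Require Import all_boot all_algebra.
From mathcomp Require Import fingroup perm.
Import GRing.Theory.
Local Open Scope R_scope.

Definition RF := R.
HB.instance Definition _ := GRing.ComNzRing.on RF.
Lemma RF_mulVf (x : RF) : (x != 0)%R -> (Rinv x * x = 1)%R.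
Proof. move=> /eqP h. change (/ x * x = 1). field. exact h. Qed.
Lemma RF_inv0 : Rinv (0 : RF) = 0. Proof. exact: Rinv_0. Qed.
HB.instance Definition _ := GRing.ComNzRing_isField.Build RF RF_mulVf RF_inv0.

Lemma RaddE (x y : R) : (x + y)%R = Rplus x y. Proof. by []. Qed.
Lemma RmulE (x y : R) : (x * y)%R = Rmult x y. Proof. by []. Qed.
Lemma RoppE (x : R) : (- x)%R = Ropp x. Proof. by []. Qed.
Lemma R0E : (0%R : R) = 0. Proof. by []. Qed.
Lemma R1E : (1%R : R) = 1. Proof. by []. Qed.
Definition RE := (RaddE, RmulE, RoppE, R0E, R1E).
Ltac normR :=
  repeat match goal with
  | |- context [@fun_of_matrix ?T ?m ?k ?A ?i ?j] =>
      tryif constr_eq T R then fail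
      else change (@fun_of_matrix T m k A i j) with (@fun_of_matrix R m k A i j)
  end.
Ltac normH :=
  repeat match goal with
  | H : context [@fun_of_matrix ?T ?m ?k ?A ?i ?j] |- _ =>
      tryif constr_eq T R then fail
      else change (@fun_of_matrix T m k A i j) with (@fun_of_matrix R m k A i j) in H
  end.
Ltac nraR := rewrite ?RE; normR; normH; nra.
Ltac lraR := rewrite ?RE; normR; normH; lra.
Ltac Rring := rewrite ?RE; match goal with |- @eq _ ?a ?b => change (@eq R a b) end; normR; ring.

Section Big.
Variable (I : Type) (r : seq I) (P : pred I).

Lemma sum_ge0 (F : I -> R) : (forall i, P i -> 0 <= F i) ->
  0 <= (\sum_(i <- r | P i) F i)%R.
Proof.
move=> h; apply: (big_ind (fun x : R => 0 <= x)).
- rewrite RE; lra.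
- by move=> x y hx hy; rewrite RE; lra.
- exact: h.
Qed.

Lemma sum_le (F G : I -> R) : (forall i, P i -> F i <= G i) ->
  (\sum_(i <- r | P i) F i)%R <= (\sum_(i <- r | P i) G i)%R.
Proof.
move=> h; apply: (big_ind2 (fun x y : R => x <= y)).
- rewrite RE; lra.
- by move=> x1 x2 y1 y2 h1 h2; rewrite !RE; lra.
- exact: h.
Qed.

Lemma sum_abs (F : I -> R) :
  Rabs (\sum_(i <- r | P i) F i)%R <= (\sum_(i <- r | P i) Rabs (F i))%R.
Proof.
apply: (big_ind2 (fun x y : R => Rabs x <= y)).
- rewrite RE Rabs_R0; lra.
- move=> x1 x2 y1 y2 h1 h2; rewrite !RE.
  apply: Rle_trans (Rabs_triang _ _) _; lra.
- move=> i _; lra.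
Qed.
End Big.

Lemma sum_term_le n (F : 'I_n -> R) k : (forall i, 0 <= F i) ->
  F k <= (\sum_(i < n) F i)%R.
Proof.
move=> h; rewrite (bigD1 k) //= RaddE.
rewrite -[X in X <= _]Rplus_0_r; apply: Rplus_le_compat_l.
by apply: sum_ge0 => i _.
Qed.

Section Quad.
Variable n : nat.
Implicit Types (M : 'M[R]_n) (c d : 'cV[R]_n).

Definition sq c : R := (\sum_(i < n) c i ord0 * c i ord0)%R.
Definition Bf M c d : R := ((c^T *m (M *m d)) ord0 ord0)%R.
Definition Qf M c : R := Bf M c c.

Lemma sqE c : sq c = ((c^T *m c) ord0 ord0)%R.
Proof. rewrite /sq !mxE; apply: eq_bigr => i _; by rewrite !mxE. Qed.

Lemma Bf_sum M c d : Bf M c d = (\sum_(i < n) c i ord0 * (M *m d) i ord0)%R.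
Proof. rewrite /Bf !mxE; apply: eq_bigr => i _; by rewrite !mxE. Qed.

Lemma sq_ge0 c : 0 <= sq c.
Proof. apply: sum_ge0 => i _; rewrite RmulE; nra. Qed.

Lemma sq_term c i : c i ord0 * c i ord0 <= sq c.
Proof.
rewrite /sq; apply: (@sum_term_le n (fun i => (c i ord0 * c i ord0)%R) i) => j.
rewrite RmulE; nra.
Qed.

Lemma sq_eq0 c : sq c = 0 -> c = 0%R.
Proof.
move=> h; apply/matrixP => i j; rewrite mxE.
have := sq_term c i; rewrite h => hi.
have -> : j = ord0 by apply: val_inj; rewrite /= (ord1 j).
rewrite R0E; nra.
Qed.

Lemma sq_pos c : (c != 0)%R -> 0 < sq c.
Proof.
move=> hc; have := sq_ge0 c; case: (Rle_lt_or_eq_dec _ _ (sq_ge0 c)) => // h0 _.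
by move: hc; rewrite (@sq_eq0 c (esym h0)) eqxx.
Qed.

Lemma Bf_sym M c d : (M^T)%R = M -> Bf M c d = Bf M d c.
Proof.
move=> hM; rewrite /Bf.
have -> : (c^T *m (M *m d) = (d^T *m (M *m c))^T)%R.
  by rewrite !trmx_mul trmxK hM mulmxA.
by rewrite mxE.
Qed.

Lemma BfDl M c1 c2 d : Bf M (c1 + c2) d = Bf M c1 d + Bf M c2 d.
Proof. by rewrite /Bf linearD /= mulmxDl mxE. Qed.

Lemma BfDr M c d1 d2 : Bf M c (d1 + d2) = Bf M c d1 + Bf M c d2.
Proof. by rewrite /Bf mulmxDr mulmxDr mxE. Qed.

Lemma BfZl M a c d : Bf M (a *: c) d = a * Bf M c d.
Proof. by rewrite /Bf linearZ /= -scalemxAl mxE. Qed.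

Lemma BfZr M a c d : Bf M c (a *: d) = a * Bf M c d.
Proof. by rewrite /Bf -scalemxAr -scalemxAr mxE. Qed.

Lemma BfBr M1 M2 c d : Bf (M1 - M2) c d = Bf M1 c d - Bf M2 c d.
Proof. rewrite /Bf mulmxBl mulmxBr !mxE; rewrite !RE; reflexivity. Qed.

Lemma Bf_scalar a c d : Bf a%:M c d = a * Bf 1%:M c d.
Proof. by rewrite /Bf !mul_scalar_mx scale1r -scalemxAr mxE. Qed.

Lemma sq_Bf c : sq c = Bf 1%:M c c.
Proof. by rewrite sqE /Bf mul1mx. Qed.

Lemma Qf_expand M c d t : (M^T)%R = M ->
  Qf M (c + t *: d) = Qf M c + 2 * t * Bf M c d + t * t * Qf M d.
Proof.
move=> hM; rewrite /Qf BfDl !BfDr !BfZl !BfZr (Bf_sym _ d c hM); Rring.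
Qed.

Lemma CS M c d : (M^T)%R = M -> (forall e, 0 <= Qf M e) ->
  Bf M c d * Bf M c d <= Qf M c * Qf M d.
Proof.
move=> hM hpsd.
set b := Bf M c d; set qc := Qf M c; set qd := Qf M d.
have h t : 0 <= qc + 2 * t * b + t * t * qd.
  by rewrite /qc /qd /b -Qf_expand //; apply: hpsd.
have hqc : 0 <= qc by apply: hpsd.
have hqd : 0 <= qd by apply: hpsd.
case: (Rle_lt_or_eq_dec _ _ hqd) => hq.
- have := h (- b / qd).
  have -> : qc + 2 * (- b / qd) * b + - b / qd * (- b / qd) * qd
           = (qc * qd - b * b) / qd by field; lra.
  move=> hh.
  have : 0 <= (qc * qd - b * b) / qd * qd by nra.
  have -> : (qc * qd - b * b) / qd * qd = qc * qd - b * b by field; lra.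
  lra.
- rewrite -hq in h *.
  case: (Req_dec b 0) => hb; first by rewrite hb; nra.
  have := h (- (qc + 1) / (2 * b)).
  have -> : qc + 2 * (- (qc + 1) / (2 * b)) * b + - (qc + 1) / (2 * b) * (- (qc + 1) / (2 * b)) * 0 = -1.
    by field.
  lra.
Qed.

Definition K1 M : R := (\sum_(i < n) \sum_(j < n) Rabs (M i j))%R.

Lemma K1_ge0 M : 0 <= K1 M.
Proof. apply: sum_ge0 => i _; apply: sum_ge0 => j _; exact: Rabs_pos. Qed.

Lemma Qf_bound M c : Rabs (Qf M c) <= K1 M * sq c.
Proof.
rewrite /Qf Bf_sum.
have -> : (\sum_(i < n) c i ord0 * (M *m c) i ord0)%R =
          (\sum_(i < n) \sum_(j < n) M i j * (c i ord0 * c j ord0))%R.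
  apply: eq_bigr => i _; rewrite mxE mulr_sumr; apply: eq_bigr => j _.
  by Rring.
apply: Rle_trans (sum_abs _ _ _ _) _.
rewrite /K1 -RmulE mulr_suml; apply: sum_le => i _.
apply: Rle_trans (sum_abs _ _ _ _) _.
rewrite mulr_suml; apply: sum_le => j _.
rewrite RmulE Rabs_mult; apply: Rmult_le_compat_l; first exact: Rabs_pos.
have hi := sq_term c i; have hj := sq_term c j.
rewrite Rabs_mult.
have : Rabs (c i ord0) * Rabs (c j ord0) <= (c i ord0 * c i ord0 + c j ord0 * c j ord0) / 2.
  have e1 : c i ord0 * c i ord0 = Rabs (c i ord0) * Rabs (c i ord0).
    by rewrite -Rabs_mult Rabs_right //; nra.
  have e2 : c j ord0 * c j ord0 = Rabs (c j ord0) * Rabs (c j ord0).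
    by rewrite -Rabs_mult Rabs_right //; nra.
  rewrite e1 e2; clear; set a := Rabs _; set b := Rabs _; have := Rle_0_sqr (a - b); rewrite /Rsqr; nra.
lra.
Qed.


Lemma abs_le_sqrt c j : Rabs (c j ord0) <= sqrt (sq c).
Proof.
rewrite -sqrt_Rsqr_abs /Rsqr; apply: sqrt_le_1_alt; exact: sq_term.
Qed.

Definition K2 M : R :=
  (\sum_(i < n) (\sum_(j < n) Rabs (M i j)) * (\sum_(j < n) Rabs (M i j)))%R.

Lemma Mv_bound M c : sq (M *m c)%R <= K2 M * sq c.
Proof.
rewrite {1}/sq /K2 -RmulE mulr_suml; apply: sum_le => i _.
set a := (\sum_(j < n) Rabs (M i j))%R.
set s := sqrt (sq c).
have hs : s * s = sq c by rewrite /s sqrt_sqrt //; exact: sq_ge0.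
have hs0 : 0 <= s by exact: sqrt_pos.
have h1 : Rabs (((M *m c)%R i ord0)) <= a * s.
  rewrite mxE; apply: Rle_trans (sum_abs _ _ _ _) _.
  rewrite /a -RmulE mulr_suml; apply: sum_le => j _.
  rewrite RmulE Rabs_mult; apply: Rmult_le_compat_l; first exact: Rabs_pos.
  exact: abs_le_sqrt.
have ha : 0 <= a by apply: sum_ge0 => j _; exact: Rabs_pos.
rewrite -hs RmulE.
have -> : ((M *m c)%R i ord0) * ((M *m c)%R i ord0) = Rabs (((M *m c)%R i ord0)) * Rabs (((M *m c)%R i ord0)).
  by rewrite -Rabs_mult Rabs_right //; apply: Rle_ge; nra.
have h0 := Rabs_pos (((M *m c)%R i ord0)).
move: h1 h0; clear; set z := Rabs _; move=> h1 h0.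
have : z * z <= (a * s) * (a * s) by apply: Rmult_le_compat.
rewrite ?RE => h2; apply: Rle_trans h2 _; right; ring.
Qed.

Lemma K2_ge0 M : 0 <= K2 M.
Proof.
apply: sum_ge0 => i _; rewrite RmulE.
have : 0 <= (\sum_(j < n) Rabs (M i j))%R by apply: sum_ge0 => j _; exact: Rabs_pos.
nra.
Qed.

Lemma sqZ a c : sq (a *: c)%R = a * a * sq c.
Proof.
rewrite /sq -RmulE mulr_sumr; apply: eq_bigr => i _; rewrite !mxE; Rring.
Qed.

Lemma unif_pos M : (M^T)%R = M -> (forall c, 0 <= Qf M c) -> (\det M)%R <> 0 ->
  exists k, 0 < k /\ forall c, k * sq c <= Qf M c.
Proof.
move=> hM hpsd hdet.
set d := (\det M)%R; set KA := K2 (\adj M)%R; set K := K1 M.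
have hKA : 0 <= KA by apply: K2_ge0.
have hK : 0 <= K by apply: K1_ge0.
have hd : 0 < d * d by exact: (Rsqr_pos_lt _ hdet).
exists (d * d / (KA * K + 1)); split.
  apply: Rdiv_lt_0_compat => //; nra.
move=> c; set u := (M *m c)%R.
have h1 : Bf M c u = sq u by rewrite Bf_sym // sqE.
have h2 := CS M c u hM hpsd; rewrite h1 in h2.
have h3 : Qf M u <= K * sq u.
  apply: Rle_trans (Rle_abs _) _; exact: Qf_bound.
have hqc := hpsd c.
have hsu := sq_ge0 u.
have h4 : sq u <= K * Qf M c.
  case: (Rle_lt_or_eq_dec _ _ hsu) => hu; last by rewrite -hu; nra.
  have : sq u * sq u <= (K * Qf M c) * sq u by nra.
  move=> hh; apply: (Rmult_le_reg_r (sq u)) => //; lra.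
have h5 : ((\adj M) *m u = d *: c)%R by rewrite /u mulmxA mul_adj_mx mul_scalar_mx.
have h6 := Mv_bound (\adj M)%R u; rewrite h5 sqZ -/KA in h6.
have h7 : d * d * sq c <= (KA * K + 1) * Qf M c by nra.
have hpos : 0 < KA * K + 1 by nra.
apply: (Rmult_le_reg_r (KA * K + 1)) => //.
have -> : d * d / (KA * K + 1) * sq c * (KA * K + 1) = d * d * sq c by field; lra.
lra.
Qed.

Lemma sym_sub_scalar M m : (M^T)%R = M -> ((M - m%:M)^T)%R = (M - m%:M)%R.
Proof. by move=> hM; rewrite linearB /= tr_scalar_mx hM. Qed.

Lemma Qf_sub_scalar M m c : Qf (M - m%:M)%R c = Qf M c - m * sq c.
Proof. by rewrite /Qf BfBr Bf_scalar -sq_Bf. Qed.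

Lemma Qf_eigen M mu v : (M *m v = mu *: v)%R -> Qf M v = mu * sq v.
Proof. by move=> h; rewrite /Qf /Bf h -scalemxAr mxE sqE. Qed.

Lemma exists_nz : (0 < n)%N -> exists c : 'cV[R]_n, (c != 0)%R.
Proof.
move=> hn; exists (const_mx 1)%R; apply/eqP => /matrixP /(_ (Ordinal hn) ord0).
rewrite !mxE => h; have : (1 : R) = 0 by []. lra.
Qed.

Lemma min_eig M : (0 < n)%N -> (M^T)%R = M ->
  exists m, Defs.eigenvalue M m /\ (forall mu, Defs.eigenvalue M mu -> m <= mu) /\
    forall c, m * sq c <= Qf M c.
Proof.
move=> hn hM.
pose E := fun t => forall c, t * sq c <= Qf M c.
have hlow : forall c, - K1 M * sq c <= Qf M c.
  move=> c; have := Qf_bound M c; have := Rle_abs (- Qf M c); rewrite Rabs_Ropp; lra.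
have [c1 hc1] := exists_nz hn.
have hs1 := @sq_pos c1 hc1.
have hbd : bound E.
  exists (Qf M c1 / sq c1) => t ht.
  have := ht c1 => h.
  apply: (Rmult_le_reg_r (sq c1)) => //.
  have -> : Qf M c1 / sq c1 * sq c1 = Qf M c1 by field; lra.
  exact: h.
have hne : exists t, E t by exists (- K1 M).
have [m [hub hlub]] := completeness E hbd hne.
have hmE : E m.
  move=> c; apply: Rnot_lt_le => hlt.
  have hsc : 0 < sq c.
    case: (Rle_lt_or_eq_dec _ _ (sq_ge0 c)) => // h0.
    have := hlow c; rewrite -h0 in hlt *; lra.
  set t := (Qf M c / sq c + m) / 2.
  have htm : t < m.
    rewrite /t; have : Qf M c / sq c < m.
      apply: (Rmult_lt_reg_r (sq c)) => //.
      have -> : Qf M c / sq c * sq c = Qf M c by field; lra.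
      exact: hlt.
    lra.
  have [t' [ht'E htt']] : exists t', E t' /\ t < t'.
    apply: NNPP => hno; have : is_upper_bound E t.
      move=> x hx; apply: Rnot_lt_le => hxt; apply: hno; by exists x.
    move/hlub; lra.
  have h1 := ht'E c.
  have h2 : t * sq c <= Qf M c by apply: Rle_trans h1; apply: Rmult_le_compat_r; lra.
  have : t * sq c = (Qf M c + m * sq c) / 2 by rewrite /t; field; lra.
  lra.
have hsym := sym_sub_scalar M m hM.
have hpsd : forall c, 0 <= Qf (M - m%:M)%R c.
  by move=> c; rewrite Qf_sub_scalar; have := hmE c; lra.
have hdet : (\det (M - m%:M))%R = 0.
  apply: NNPP => hd.
  have [k [hk hkq]] := unif_pos _ hsym hpsd hd.
  have : E (m + k).
    move=> c; have := hkq c; rewrite Qf_sub_scalar; lra.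
  move/hub; lra.
have [w hw0 hwB] : exists2 w : 'rV[R]_n, (w != 0)%R & (w *m (M - m%:M))%R = 0%R.
  apply: (elimT (@det0P RF n (M - m%:M)%R)); by apply/eqP.
exists m; split; [|split] => //.
  exists (w^T)%R; split.
    apply/eqP => h; move: hw0; by rewrite -[w]trmxK h trmx0 eqxx.
  have : ((M - m%:M) *m w^T)%R = 0%R by rewrite -{1}hsym -trmx_mul hwB trmx0.
  rewrite mulmxBl mul_scalar_mx; exact: subr0_eq.
move=> mu [v [hv hMv]].
have hsv := @sq_pos v hv.
have := hmE v; rewrite (Qf_eigen _ _ _ hMv) => h.
apply: (Rmult_le_reg_r (sq v)) => //.
Qed.

Lemma lambda1_prop M : (0 < n)%N -> (M^T)%R = M ->
  Defs.eigenvalue M (lambda1 M) /\ forall c, lambda1 M * sq c <= Qf M c.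
Proof.
move=> hn hM; have [m [he [hmin hq]]] := min_eig M hn hM.
have := @epsilon_spec R (inhabits 0)
  (fun l => Defs.eigenvalue M l /\ forall mu, Defs.eigenvalue M mu -> l <= mu).
rewrite -/(lambda1 M) => hspec.
have [he' hmin'] := hspec (ex_intro _ m (conj he hmin)).
have -> : lambda1 M = m by apply: Rle_antisym; [apply: hmin' | apply: hmin].
by split.
Qed.

Lemma lambda1_psd M : (0 < n)%N -> (M^T)%R = M -> (forall c, 0 <= Qf M c) ->
  0 <= lambda1 M.
Proof.
move=> hn hM hpsd; have [[v [hv hMv]] _] := lambda1_prop M hn hM.
have hsv := @sq_pos v hv; have := hpsd v; rewrite (Qf_eigen _ _ _ hMv) => h.
apply: (Rmult_le_reg_r (sq v)) => //; lra.
Qed.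

End Quad.
Arguments sq {n}. Arguments Bf {n}. Arguments Qf {n}. Arguments K1 {n}. Arguments K2 {n}.

Section Cont.
Variable n : nat.
Variable A : 'M[R]_n.

Definition ctm (F : 'M[R]_n -> R) : Prop :=
  forall eps, 0 < eps -> exists del, 0 < del /\
    forall B : 'M[R]_n, (forall i j, Rabs (B i j - A i j) < del) -> Rabs (F B - F A) < eps.

Lemma ctm_ext F G : (forall B, F B = G B) -> ctm F -> ctm G.
Proof.
move=> e h eps he; have [d [hd h2]] := h eps he; exists d; split => // B hB.
rewrite -!e; exact: h2.
Qed.

Lemma ctm_const a : ctm (fun _ => a).
Proof. move=> eps he; exists 1; split; first lra. move=> B _; rewrite Rminus_diag Rabs_R0 //. Qed.

Lemma ctm_entry i j : ctm (fun B => B i j).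
Proof. move=> eps he; exists eps; split => // B hB; exact: hB. Qed.

Lemma ctm_add F G : ctm F -> ctm G -> ctm (fun B => F B + G B)%R.
Proof.
move=> hF hG eps he.
have [d1 [hd1 h1]] := hF (eps / 2) ltac:(lra).
have [d2 [hd2 h2]] := hG (eps / 2) ltac:(lra).
exists (Rmin d1 d2); split; first by apply: Rmin_pos.
move=> B hB.
have := h1 B (fun i j => Rlt_le_trans _ _ _ (hB i j) (Rmin_l _ _)).
have := h2 B (fun i j => Rlt_le_trans _ _ _ (hB i j) (Rmin_r _ _)).
rewrite !RaddE => e2 e1.
have -> : F B + G B - (F A + G A) = (F B - F A) + (G B - G A) by ring.
apply: Rle_lt_trans (Rabs_triang _ _) _; lra.
Qed.

Lemma ctm_mul F G : ctm F -> ctm G -> ctm (fun B => F B * G B)%R.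
Proof.
move=> hF hG eps he.
set a := F A; set b := G A.
have ha := Rabs_pos a; have hb := Rabs_pos b.
set e1 := eps / (2 * (Rabs b + 2)).
set e2 := Rmin 1 (eps / (2 * (Rabs a + 1))).
have he1 : 0 < e1 by apply: Rdiv_lt_0_compat; lra.
have he2 : 0 < e2 by apply: Rmin_pos; [lra | apply: Rdiv_lt_0_compat; lra].
have [d1 [hd1 h1]] := hF e1 he1.
have [d2 [hd2 h2]] := hG e2 he2.
exists (Rmin d1 d2); split; first by apply: Rmin_pos.
move=> B hB.
have k1 := h1 B (fun i j => Rlt_le_trans _ _ _ (hB i j) (Rmin_l _ _)).
have k2 := h2 B (fun i j => Rlt_le_trans _ _ _ (hB i j) (Rmin_r _ _)).
rewrite !RmulE.
rewrite -/a -/b in k1 k2 *.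
set x := F B in k1 *; set y := G B in k2 *.
have -> : x * y - a * b = (x - a) * y + a * (y - b) by ring.
apply: Rle_lt_trans (Rabs_triang _ _) _; rewrite !Rabs_mult.
have e21 : e2 <= 1 by apply: Rmin_l.
have e22 : e2 <= eps / (2 * (Rabs a + 1)) by apply: Rmin_r.
have hy : Rabs y <= Rabs b + 1.
  have : Rabs y - Rabs b <= Rabs (y - b) by apply: Rabs_triang_inv.
  lra.
have t1 : Rabs (x - a) * Rabs y <= e1 * (Rabs b + 1).
  apply: Rmult_le_compat; try exact: Rabs_pos; lra.
have t1' : e1 * (Rabs b + 1) < eps / 2.
  rewrite /e1.
  have -> : eps / (2 * (Rabs b + 2)) * (Rabs b + 1) = eps / 2 * ((Rabs b + 1) / (Rabs b + 2)).
    field; lra.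
  have : (Rabs b + 1) / (Rabs b + 2) < 1.
    apply: (Rmult_lt_reg_r (Rabs b + 2)); first lra.
    have -> : (Rabs b + 1) / (Rabs b + 2) * (Rabs b + 2) = Rabs b + 1 by field; lra.
    lra.
  nra.
have t2 : Rabs a * Rabs (y - b) <= Rabs a * e2.
  apply: Rmult_le_compat_l => //; lra.
have t2' : Rabs a * e2 < eps / 2.
  apply: Rle_lt_trans (Rmult_le_compat_l _ _ _ ha e22) _.
  have -> : Rabs a * (eps / (2 * (Rabs a + 1))) = eps / 2 * (Rabs a / (Rabs a + 1)).
    field; lra.
  have : Rabs a / (Rabs a + 1) < 1.
    apply: (Rmult_lt_reg_r (Rabs a + 1)); first lra.
    have -> : Rabs a / (Rabs a + 1) * (Rabs a + 1) = Rabs a by field; lra.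
    lra.
  nra.
lra.
Qed.

Lemma ctm_sum (I : Type) (r : seq I) (P : pred I) (F : I -> 'M[R]_n -> R) :
  (forall i, ctm (F i)) -> ctm (fun B => \sum_(i <- r | P i) F i B)%R.
Proof.
move=> h; elim: r => [|x r IH].
  apply: (ctm_ext (fun _ => 0%R)); first by move=> B; rewrite big_nil.
  exact: ctm_const.
case hx: (P x).
  apply: (ctm_ext (fun B => (F x B + \sum_(i <- r | P i) F i B)%R)).
    by move=> B; rewrite big_cons hx.
  exact: ctm_add.
apply: (ctm_ext (fun B => (\sum_(i <- r | P i) F i B)%R)) => //.
by move=> B; rewrite big_cons hx.
Qed.

Lemma ctm_prod (I : Type) (r : seq I) (P : pred I) (F : I -> 'M[R]_n -> R) :
  (forall i, ctm (F i)) -> ctm (fun B => \prod_(i <- r | P i) F i B)%R.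
Proof.
move=> h; elim: r => [|x r IH].
  apply: (ctm_ext (fun _ => 1%R)); first by move=> B; rewrite big_nil.
  exact: ctm_const.
case hx: (P x).
  apply: (ctm_ext (fun B => (F x B * \prod_(i <- r | P i) F i B)%R)).
    by move=> B; rewrite big_cons hx.
  exact: ctm_mul.
apply: (ctm_ext (fun B => (\prod_(i <- r | P i) F i B)%R)) => //.
by move=> B; rewrite big_cons hx.
Qed.

Lemma ctm_det : ctm (fun B => \det B)%R.
Proof.
apply: (ctm_ext (fun B => \sum_(s : 'S_n) (-1) ^+ s * \prod_i B i (s i))%R) => //.
apply: ctm_sum => s; apply: ctm_mul; first exact: ctm_const.
apply: ctm_prod => i; exact: ctm_entry.
Qed.

End Cont.
Arguments ctm {n}.

Section DetPSD.
Variable n : nat.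

Definition Mt (M : 'M[R]_n) (t : R) : 'M[R]_n :=
  (\matrix_(i, j) ((1 - t) * M i j + (if i == j then t else 0)))%R.

Lemma MtE M t : Mt M t = ((1 - t) *: M + t%:M)%R.
Proof.
apply/matrixP => i j; rewrite !mxE.
by case: (i == j); rewrite ?mulr1n ?mulr0n.
Qed.

Lemma Mt_sym M t : (M^T)%R = M -> ((Mt M t)^T)%R = Mt M t.
Proof. by move=> hM; rewrite MtE linearD linearZ /= tr_scalar_mx hM. Qed.

Lemma Qf_Mt M t c : Qf (Mt M t) c = (1 - t) * Qf M c + t * sq c.
Proof.
rewrite MtE /Qf /Bf sqE mulmxDl -scalemxAl mul_scalar_mx mulmxDr -!scalemxAr !mxE.
by Rring.
Qed.

Lemma abs_entry_le_K1 (M : 'M[R]_n) i j : Rabs (M i j) <= K1 M.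
Proof.
rewrite /K1; apply: (Rle_trans _ ((\sum_(j < n) Rabs (M i j))%R)).
  apply: (@sum_term_le n (fun j => Rabs (M i j)) j) => k; exact: Rabs_pos.
apply: (@sum_term_le n (fun i => \sum_(j < n) Rabs (M i j))%R i) => k.
by apply: sum_ge0 => l _; exact: Rabs_pos.
Qed.

Lemma Mt_cont M : continuity (fun t => \det (Mt M t))%R.
Proof.
move=> t0 eps he.
have [del [hdel h]] := @ctm_det n (Mt M t0) eps he.
have hK := @K1_ge0 n M.
exists (del / (K1 M + 1)); split.
  apply: Rdiv_lt_0_compat; lra.
move=> t [_ ht]; rewrite /= /Rdist in ht *.
apply: h => i j; rewrite !mxE.
have e : (1 - t) * M i j + (if i == j then t else 0) -
         ((1 - t0) * M i j + (if i == j then t0 else 0)) =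
         (t - t0) * ((if i == j then 1 else 0) - M i j).
  by case: (i == j); ring.
rewrite !RE e Rabs_mult.
have hij : Rabs ((if i == j then 1 else 0) - M i j) <= K1 M + 1.
  apply: Rle_trans (Rabs_triang _ _) _; rewrite Rabs_Ropp.
  have := abs_entry_le_K1 M i j.
  case: (i == j); rewrite ?Rabs_R1 ?Rabs_R0; lra.
have ht0 := Rabs_pos (t - t0).
have : Rabs (t - t0) * (K1 M + 1) < del.
  apply: (Rmult_lt_reg_r (/ (K1 M + 1))).
    apply: Rinv_0_lt_compat; lra.
  have -> : Rabs (t - t0) * (K1 M + 1) * / (K1 M + 1) = Rabs (t - t0) by field; lra.
  exact: ht.
have := Rmult_le_compat_l _ _ _ ht0 hij.
lra.
Qed.

Lemma det_psd (M : 'M[R]_n) : (M^T)%R = M -> (forall c, 0 <= Qf M c) -> 0 <= (\det M)%R.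
Proof.
move=> hM hpsd; apply: Rnot_lt_le => hneg.
have f0 : (\det (Mt M 0))%R = (\det M)%R.
  congr (\det _)%R; apply/matrixP => i j; rewrite !mxE.
  by case: (i == j); Rring.
have f1 : (\det (Mt M 1))%R = 1.
  have -> : Mt M 1 = 1%:M%R.
    apply/matrixP => i j; rewrite !mxE.
    by case: (i == j); rewrite ?mulr1n ?mulr0n; Rring.
  by rewrite det1.
have [z [[hz0 hz1] hfz]] := IVT _ 0 1 (Mt_cont M) ltac:(lra)
  ltac:(cbv beta; rewrite f0; exact: hneg) ltac:(cbv beta; rewrite f1; lra).
have hz : 0 < z.
  case: (Rle_lt_or_eq_dec _ _ hz0) => // hz; rewrite -hz f0 in hfz; lra.
have [w hw0 hwB] : exists2 w : 'rV[R]_n, (w != 0)%R & (w *m (Mt M z))%R = 0%R.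
  apply: (elimT (@det0P RF n (Mt M z))); by apply/eqP.
set c := (w^T)%R.
have hc : (c != 0)%R.
  apply/eqP => h; move: hw0; by rewrite -[w]trmxK -/c h trmx0 eqxx.
have hMc : ((Mt M z) *m c)%R = 0%R.
  by rewrite /c -{1}(Mt_sym M z hM) -trmx_mul hwB trmx0.
have hq : Qf (Mt M z) c = 0 by rewrite /Qf /Bf hMc mulmx0 mxE.
rewrite Qf_Mt in hq.
have := hpsd c; have := @sq_pos n c hc => hs hq2.
nra.
Qed.

End DetPSD.

Lemma ctm_Qf n (A : 'M[R]_n) (c : 'cV[R]_n) : ctm A (fun B => Qf B c).
Proof.
apply: (@ctm_ext n A (fun B => \sum_i c i ord0 * \sum_j B i j * c j ord0)%R).
  move=> B; rewrite /Qf Bf_sum; apply: eq_bigr => i _; by rewrite mxE.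
apply: ctm_sum => i; apply: ctm_mul; first exact: ctm_const.
apply: ctm_sum => j; apply: ctm_mul; [exact: ctm_entry | exact: ctm_const].
Qed.

Lemma entry_le_mnorm n (X : 'M[R]_n) i j : Rabs (X i j) <= mnorm X.
Proof.
rewrite -sqrt_Rsqr_abs /Rsqr /mnorm; apply: sqrt_le_1_alt.
apply: (Rle_trans _ ((\sum_(j0 < n) X i j0 * X i j0)%R)).
  apply: (@sum_term_le n (fun j0 => X i j0 * X i j0)%R j) => k; rewrite RmulE; nra.
apply: (@sum_term_le n (fun i0 => \sum_(j0 < n) X i0 j0 * X i0 j0)%R i) => k.
by apply: sum_ge0 => l _; rewrite RmulE; nra.
Qed.

Lemma entry_close n (A B : 'M[R]_n) d : mnorm (B - A)%R < d ->
  forall i j, Rabs (B i j - A i j) < d.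
Proof.
move=> h i j; apply: Rle_lt_trans h.
have := @entry_le_mnorm n (B - A)%R i j; by rewrite !mxE.
Qed.

Lemma sym_entry n (B : 'M[R]_n) i j : Defs.symmetric B -> B i j = B j i.
Proof. move=> h; by rewrite -{1}h mxE. Qed.

Arguments entry_close {n A B d}.
Arguments sym_entry {n B}.
Arguments lambda1_prop {n M}.
Arguments lambda1_psd {n M}.
Arguments det_psd {n M}.
Arguments sq_ge0 {n}.
Arguments ctm_Qf {n}.

Theorem mainTheorem2 (n : nat) (X Y : vec n -> Prop) (f g H u : vec n -> R)
  (phi : vec n -> R) (Dphi : vec n -> vec n) (D2phi : vec n -> 'M[R]_n) (x : vec n) :
  (0 < n)%N ->
  (* (H1) *)
  convex_bounded_domain X -> convex_bounded_domain Y ->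
  (* (H2) *)
  L1_nonneg X f -> lsc_on X f ->
  (* (H3) *)
  L1_nonneg whole g -> (forall y, Y y -> 0 < g y) -> (forall y, ~ Y y -> g y = 0) ->
  usc_on whole g ->
  (* (H4) *)
  (exists I, has_integral X f I /\ has_integral whole g I) ->
  defining_function Y H ->
  viscosity_subsolution X f g H u ->
  is_C2 phi Dphi D2phi ->
  X x ->
  strict_local_max_at X (fun y => u y - phi y) x ->
  Rmax (Rmax (- g (Dphi x) * (\det (D2phi x))%R + f x) (- lambda1 (D2phi x)))
       (H (Dphi x)) <= 0.
Proof.
move=> hn _ _ _ hflsc [hg0 _] _ _ gusc _ [Hcont _] [_ hvisc] hC2 hx hstrict.
set p := Dphi x; set A := D2phi x.
have hloc : local_max_at X (fun y => u y - phi y) x.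
  have [r [hr hs]] := hstrict; exists r; split => // y hy hd.
  case: (classic (y = x)) => [->|hne]; first lra.
  by apply: Rlt_le; apply: hs.
have env := hvisc phi Dphi D2phi hC2 x hx hloc.
rewrite /lsc_envelope_le -/p -/A in env.
have hAsym : (A^T)%R = A.
  apply/matrixP => i j; rewrite mxE.
  apply: NNPP => hne.
  have hpos : 0 < Rabs (A j i - A i j).
    apply: Rabs_pos_lt => h; apply: hne; lra.
  set e := Rabs (A j i - A i j) / 3.
  have he : 0 < e by rewrite /e; lra.
  have [y [q [B [_ [hB [_ [_ [hBA _]]]]]]]] := env e 1 he Rlt_0_1.
  have h1 := entry_close hBA i j; have h2 := entry_close hBA j i.
  rewrite (sym_entry i j hB) in h1.
  have : Rabs (A j i - A i j) <= Rabs (B j i - A i j) + Rabs (B j i - A j i).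
    have -> : A j i - A i j = (B j i - A i j) - (B j i - A j i) by ring.
    apply: Rle_trans (Rabs_triang _ _) _; rewrite Rabs_Ropp; lra.
  rewrite /e in h1 h2; lra.
have hApsd : forall c, 0 <= Qf A c.
  move=> c; apply: Rnot_lt_le => hneg.
  set eta := - Qf A c.
  have heta : 0 < eta by rewrite /eta; lra.
  have [del [hdel hct]] := ctm_Qf A c (eta / 2) ltac:(lra).
  have hsc := sq_ge0 c.
  set e := eta / (2 * (sq c + 1)).
  have he : 0 < e by apply: Rdiv_lt_0_compat; lra.
  have [y [q [B [_ [hB [_ [_ [hBA hF]]]]]]]] := env del e hdel he.
  have hl : - lambda1 B < e.
    have : - lambda1 B <= Fop f g H y q B.
      rewrite /Fop; exact: Rle_trans (Rmax_r _ _) (Rmax_l _ _).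
    lra.
  have [_ hq] := lambda1_prop hn hB.
  have h1 := hq c.
  have h2 := hct B (entry_close hBA).
  have h3 : e * sq c < eta / 2.
    rewrite /e.
    have -> : eta / (2 * (sq c + 1)) * sq c = eta / 2 * (sq c / (sq c + 1)) by field; lra.
    have : sq c / (sq c + 1) < 1.
      apply: (Rmult_lt_reg_r (sq c + 1)); first lra.
      have -> : sq c / (sq c + 1) * (sq c + 1) = sq c by field; lra.
      lra.
    nra.
  have h4 : - e * sq c <= lambda1 B * sq c by apply: Rmult_le_compat_r; lra.
  have := Rabs_def2 _ _ h2 => -[h5 h6].
  cbv beta in h5, h6; rewrite /eta in h3 h5 h6 heta.
lra.
have hdetA : 0 <= (\det A)%R by apply: det_psd.
have hlamA : 0 <= lambda1 A by apply: lambda1_psd.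
have hH : H p <= 0.
  apply: Rnot_lt_le => hpos.
  have [del [hdel hct]] := Hcont p I (H p / 2) ltac:(lra).
  have [y [q [B [_ [_ [_ [hqp [_ hF]]]]]]]] := env del (H p / 2) hdel ltac:(lra).
  have h1 := hct q I hqp.
  have h2 : H q < H p / 2.
    have : H q <= Fop f g H y q B by rewrite /Fop; exact: Rmax_r.
    lra.
  have := Rabs_def2 _ _ h1 => -[_ h3]; lra.
have hMA : - g p * (\det A)%R + f x <= 0.
  apply: Rnot_lt_le => hpos.
  set c0 := - g p * (\det A)%R + f x in hpos.
  set G := g p; set D := (\det A)%R.
  have hG : 0 <= G by apply: hg0.
  have hD : 0 <= D by exact: hdetA.
  set eta := Rmin 1 (c0 / (G + D + 6)).
  have heta1 : eta <= 1 by apply: Rmin_l.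
  have heta2 : eta <= c0 / (G + D + 6) by apply: Rmin_r.
  have heta : 0 < eta by apply: Rmin_pos; [lra | apply: Rdiv_lt_0_compat; lra].
  have [dg [hdg hgq]] := gusc p I eta heta.
  have [df [hdf hfy]] := hflsc x hx eta heta.
  have [dd [hdd hdet]] := @ctm_det n A eta heta.
  set del := Rmin dg (Rmin df dd).
  have hdel : 0 < del by apply: Rmin_pos => //; apply: Rmin_pos.
  have [y [q [B [hy [_ [hyx [hqp [hBA hF]]]]]]]] := env del eta hdel heta.
  have k1 : g q < G + eta.
    apply: hgq => //; apply: Rlt_le_trans hqp _; exact: Rmin_l.
  have k2 : f x - eta < f y.
    apply: hfy => //; apply: Rlt_le_trans hyx _.
    apply: Rle_trans (Rmin_r _ _) _; exact: Rmin_l.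
  have k3 : Rabs ((\det B)%R - D) < eta.
    apply: hdet => i j; apply: Rlt_le_trans (entry_close hBA i j) _.
    apply: Rle_trans (Rmin_r _ _) _; exact: Rmin_r.
  have k4 : - g q * (\det B)%R + f y < eta.
    have : - g q * (\det B)%R + f y <= Fop f g H y q B.
      rewrite /Fop; exact: Rle_trans (Rmax_l _ _) (Rmax_l _ _).
    lra.
  have hgq0 : 0 <= g q by apply: hg0.
  have := Rabs_def2 _ _ k3 => -[k5 _].
  have k6 : g q * (\det B)%R <= (G + eta) * (D + eta).
    case: (Rle_lt_dec (\det B)%R 0) => hdb.
      have : g q * (\det B)%R <= 0 by nra.
      have : 0 <= (G + eta) * (D + eta) by nra.
      lra.
    apply: Rmult_le_compat; lra.
  have k7 : c0 < eta * (G + D + 3).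
    rewrite /c0 -/G -/D; nra.
  have : eta * (G + D + 6) <= c0.
    have := Rmult_le_compat_r (G + D + 6) _ _ ltac:(nra) heta2.
    have -> : c0 / (G + D + 6) * (G + D + 6) = c0 by field; nra.
    done.
  nra.
rewrite -/p -/A.
apply: Rmax_lub; last exact: hH.
apply: Rmax_lub; first exact: hMA.
lra.
Qed.
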